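(* Let $V$ be a finite set of variables, let $(\mathit{base}, \mathit{stay}, \mathit{step}, \mathit{conc})$ be a generalized acceleration lemma (GAL) over $V$, and let $\mathit{inv}$ be a first-order formula with free variables in $V$. Let $\mathit{inv}' := \mathit{inv}[V \mapsto V']$. Then $(\mathit{base} \land \mathit{inv},\ \mathit{stay} \land \mathit{inv}',\ \mathit{step} \land \mathit{inv}',\ \mathit{conc} \land \mathit{inv})$ is also a GAL over $V$.
   Context: Fix a first-order theory $T$. For a set of variables $X$, $\mathcal{A}(X)$ denotes the set of assignments $\nu: X \to \mathcal{V}$ (values). $X' = \{x' \mid x \in X\}$ is a disjoint primed copy of $X$; for $\nu \in \mathcal{A}(X)$, $\nu' \in \mathcal{A}(X')$ is given by $\nu'(x') = \nu(x)$; for $\nu_1,\nu_2 \in \mathcal{A}(X)$, $\langle \nu_1,\nu_2\rangle := \nu_1 \uplus \nu_2'$. $\nu \models_T \alpha$ denotes entailment in $T$. For a formula $\alpha$, $\alpha[V\mapsto V']$ is the result of replacing each $v\in V$ simultaneously by $v'$. A generalized acceleration lemma (GAL) over $V$ is a tuple $(\mathit{base}, \mathit{stay}, \mathit{step}, \mathit{conc})$ of first-order formulas with $\mathit{base}, \mathit{conc}$ having free variables in $V$ and $\mathit{stay}, \mathit{step}$ having free variables in $V \cup V'$, such that: (I) for every sequence $\alpha \in \mathcal{A}(V)^\omega$ with $\alpha[0] \models_T \mathit{conc}$, if (a) for all $i$, $\langle\alpha[i],\alpha[i+1]\rangle \models_T \mathit{step} \lor \mathit{stay}$, and (b) for all $i$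 there is $j \ge i$ with $\langle\alpha[j],\alpha[j+1]\rangle \models_T \mathit{step}$, then there is $k$ with $\alpha[k] \models_T \mathit{base}$; and (II) for all $\nu,\nu' \in \mathcal{A}(V)$ with $\nu \models_T \mathit{conc}$ and $\langle \nu,\nu'\rangle \models_T \mathit{step}\lor\mathit{stay}$, we have $\nu' \models_T \mathit{conc}$. *)

(* Defs.v *)
From Stdlib Require Import List.
Import ListNotations.
Set Implicit Arguments.

Inductive Var : Type := vbase (x : nat) | vprime (x : nat).

Definition Var_eq_dec (a b : Var) : {a = b} + {a <> b}.
Proof. decide equality; apply PeanoNat.Nat.eq_dec. Defined.

Section FO.
Variables (Fsym Psym Val : Type).

Inductive term : Type :=
| tvar (v : Var)
| tapp (f : Fsym) (args : list term).

Inductive formula : Type :=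
| ftrue | ffalse
| fpred (p : Psym) (args : list term)
| feq (t1 t2 : term)
| fnot (a : formula)
| fand (a b : formula)
| f_or (a b : formula)
| fimp (a b : formula)
| fex (x : Var) (a : formula)
| fall (x : Var) (a : formula).

Record structure : Type := Structure {
  fint : Fsym -> list Val -> Val;
  pint : Psym -> list Val -> Prop }.

Definition assignment := Var -> Val.

Definition upd (e : assignment) (x : Var) (d : Val) : assignment :=
  fun y => if Var_eq_dec x y then d else e y.

Fixpoint teval (M : structure) (e : assignment) (t : term) : Val :=
  match t with
  | tvar v => e v
  | tapp f ts => fint M f (map (teval M e) ts)
  end.

Fixpoint sat (M : structure) (e : assignment) (a : formula) : Prop :=
  match a with
  | ftrue => True
  | ffalse => False
  | fpred p ts => pint M p (map (teval M e) ts)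
  | feq t1 t2 => teval M e t1 = teval M e t2
  | fnot a => ~ sat M e a
  | fand a b => sat M e a /\ sat M e b
  | f_or a b => sat M e a \/ sat M e b
  | fimp a b => sat M e a -> sat M e b
  | fex x a => exists d, sat M (upd e x d) a
  | fall x a => forall d, sat M (upd e x d) a
  end.

Fixpoint tfv (t : term) : list Var :=
  match t with
  | tvar v => [v]
  | tapp _ ts => flat_map tfv ts
  end.

Fixpoint ffv (a : formula) : list Var :=
  match a with
  | ftrue | ffalse => []
  | fpred _ ts => flat_map tfv ts
  | feq t1 t2 => tfv t1 ++ tfv t2
  | fnot a => ffv a
  | fand a b | f_or a b | fimp a b => ffv a ++ ffv b
  | fex x a | fall x a => remove Var_eq_dec x (ffv a)
  end.

Fixpoint trename (s : Var -> Var) (t : term) : term :=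
  match t with
  | tvar v => tvar (s v)
  | tapp f ts => tapp f (map (trename s) ts)
  end.

Fixpoint frename (s : Var -> Var) (a : formula) : formula :=
  match a with
  | ftrue => ftrue
  | ffalse => ffalse
  | fpred p ts => fpred p (map (trename s) ts)
  | feq t1 t2 => feq (trename s t1) (trename s t2)
  | fnot a => fnot (frename s a)
  | fand a b => fand (frename s a) (frename s b)
  | f_or a b => f_or (frename s a) (frename s b)
  | fimp a b => fimp (frename s a) (frename s b)
  | fex x a => fex (s x) (frename s a)
  | fall x a => fall (s x) (frename s a)
  end.

(* A theory T is given by its class of models (all with carrier Val);
   nu |=_T alpha  means alpha holds under nu in every model of T. *)
Definition entails (T : structure -> Prop) (e : assignment) (a : formula) : Prop :=
  forall M, T M -> sat M e a.

End FO.

(* The bijective swap x <-> x' ; used to implement alpha[V |-> V'] without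
   variable capture (bound variables are renamed consistently). *)
Definition swap_prime (v : Var) : Var :=
  match v with vbase x => vprime x | vprime x => vbase x end.

Definition prime_formula {F P : Type} (a : formula F P) : formula F P :=
  frename swap_prime a.

(* <nu1, nu2> := nu1 \uplus nu2' *)
Definition pair_assign {Val : Type} (n1 n2 : assignment Val) : assignment Val :=
  fun v => match v with vbase x => n1 (vbase x) | vprime x => n2 (vbase x) end.

Definition over_V {F P : Type} (V : list nat) (a : formula F P) : Prop :=
  forall v, In v (ffv a) -> exists x, In x V /\ v = vbase x.

Definition over_VV' {F P : Type} (V : list nat) (a : formula F P) : Prop :=
  forall v, In v (ffv a) -> exists x, In x V /\ (v = vbase x \/ v = vprime x).

Definition is_GAL {F P Val : Type} (T : structure F P Val -> Prop) (V : list nat)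
  (base stay step conc : formula F P) : Prop :=
  over_V V base /\ over_V V conc /\ over_VV' V stay /\ over_VV' V step /\
  (forall alpha : nat -> assignment Val,
     entails T (alpha 0) conc ->
     (forall i, entails T (pair_assign (alpha i) (alpha (S i))) (f_or step stay)) ->
     (forall i, exists j, i <= j /\
        entails T (pair_assign (alpha j) (alpha (S j))) step) ->
     exists k, entails T (alpha k) base) /\
  (forall nu nu' : assignment Val,
     entails T nu conc ->
     entails T (pair_assign nu nu') (f_or step stay) ->
     entails T nu' conc).

(* Main.v *)
Require Import Defs.
From Stdlib Require Import List.
From Stdlib Require Import FunctionalExtensionality.
Import ListNotations.

Section Aux.
Variables (Fsym Psym Val : Type).

Lemma teval_rename (M : structure Fsym Psym Val) (s : Var -> Var) :
  forall (t : term Fsym) e, teval M e (trename s t) = teval M (fun v => e (s v)) t.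
Proof.
  fix IH 1. intros t e. destruct t as [v|f ts]; simpl; auto.
  f_equal. rewrite map_map. induction ts as [|t ts IHts]; simpl; auto.
  rewrite IH, IHts. reflexivity.
Qed.

Lemma teval_coinc (M : structure Fsym Psym Val) :
  forall (t : term Fsym) e1 e2, (forall v, In v (tfv t) -> e1 v = e2 v) ->
  teval M e1 t = teval M e2 t.
Proof.
  fix IH 1. intros t e1 e2 H. destruct t as [v|f ts]; simpl in *.
  - apply H; auto.
  - f_equal. induction ts as [|t ts IHts]; simpl in *; auto.
    rewrite (IH t e1 e2), IHts; auto.
    + intros v Hv; apply H; apply in_or_app; auto.
    + intros v Hv; apply H; apply in_or_app; auto.
Qed.

Lemma map_teval_coinc (M : structure Fsym Psym Val) (ts : list (term Fsym)) e1 e2 :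
  (forall v, In v (flat_map (@tfv _) ts) -> e1 v = e2 v) ->
  map (teval M e1) ts = map (teval M e2) ts.
Proof.
  induction ts as [|t ts IHts]; simpl; intros H; auto.
  rewrite (teval_coinc M t e1 e2), IHts; auto;
  intros v Hv; apply H; apply in_or_app; auto.
Qed.

Lemma sat_coinc (M : structure Fsym Psym Val) :
  forall (a : formula Fsym Psym) e1 e2, (forall v, In v (ffv a) -> e1 v = e2 v) ->
  (sat M e1 a <-> sat M e2 a).
Proof.
  induction a; intros e1 e2 H; simpl in *; try tauto.
  - rewrite (map_teval_coinc M args e1 e2 H). tauto.
  - rewrite (teval_coinc M t1 e1 e2), (teval_coinc M t2 e1 e2); try tauto;
    intros v Hv; apply H; apply in_or_app; auto.
  - rewrite (IHa e1 e2 H); tauto.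
  - rewrite (IHa1 e1 e2), (IHa2 e1 e2); try tauto; intros v Hv; apply H; apply in_or_app; auto.
  - rewrite (IHa1 e1 e2), (IHa2 e1 e2); try tauto; intros v Hv; apply H; apply in_or_app; auto.
  - rewrite (IHa1 e1 e2), (IHa2 e1 e2); try tauto; intros v Hv; apply H; apply in_or_app; auto.
  - split; intros [d Hd]; exists d; revert Hd; apply IHa;
      intros v Hv; unfold upd; destruct (Var_eq_dec x v); auto;
      first [apply H; apply in_in_remove; auto | symmetry; apply H; apply in_in_remove; auto].
  - split; intros Hd d; generalize (Hd d); apply IHa;
      intros v Hv; unfold upd; destruct (Var_eq_dec x v); auto;
      first [apply H; apply in_in_remove; auto | symmetry; apply H; apply in_in_remove; auto].
Qed.

Lemma sat_rename (M : structure Fsym Psym Val) (s : Var -> Var)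
  (Hs : forall x y, s x = s y -> x = y) :
  forall (a : formula Fsym Psym) e, sat M e (frename s a) <-> sat M (fun v => e (s v)) a.
Proof.
  assert (Hm : forall ts e, map (teval M e) (map (trename s) ts) =
                         map (teval M (fun v => e (s v))) ts).
  { intros ts e; rewrite map_map; apply map_ext; intros; apply teval_rename. }
  assert (Hu : forall (e : assignment Val) x (d : Val), (fun v => upd e (s x) d (s v)) = upd (fun v => e (s v)) x d).
  { intros e x d; apply functional_extensionality; intros y; unfold upd.
    destruct (Var_eq_dec (s x) (s y)) as [E|E]; destruct (Var_eq_dec x y); auto.
    - apply Hs in E; contradiction.
    - subst; contradiction. }
  induction a; intros e; simpl; try tauto.
  - rewrite Hm; tauto.
  - rewrite !teval_rename; tauto.
  - rewrite IHa; tauto.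
  - rewrite IHa1, IHa2; tauto.
  - rewrite IHa1, IHa2; tauto.
  - rewrite IHa1, IHa2; tauto.
  - split; intros [d Hd]; exists d; [rewrite <- Hu; apply IHa; auto | apply IHa; rewrite Hu; auto].
  - split; intros Hd d; [rewrite <- Hu; apply IHa; auto | apply IHa; rewrite Hu; auto].
Qed.

Lemma tfv_rename (s : Var -> Var) :
  forall (t : term Fsym) v, In v (tfv (trename s t)) -> exists w, In w (tfv t) /\ v = s w.
Proof.
  fix IH 1. intros t v Hv. destruct t as [u|f ts]; simpl in *.
  - destruct Hv as [<-|[]]. exists u; auto.
  - induction ts as [|t ts IHts]; simpl in *; [contradiction|].
    apply in_app_or in Hv as [Hv|Hv].
    + destruct (IH t v Hv) as [w [Hw ->]]. exists w; split; auto; apply in_or_app; auto.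
    + destruct (IHts Hv) as [w [Hw ->]]. exists w; split; auto; apply in_or_app; auto.
Qed.

Lemma flat_tfv_rename (s : Var -> Var) (ts : list (term Fsym)) v :
  In v (flat_map (@tfv _) (map (trename s) ts)) ->
  exists w, In w (flat_map (@tfv _) ts) /\ v = s w.
Proof.
  induction ts as [|t ts IHts]; simpl; [contradiction|]; intros Hv.
  apply in_app_or in Hv as [Hv|Hv].
  - destruct (tfv_rename s t v Hv) as [w [Hw ->]]. exists w; split; auto; apply in_or_app; auto.
  - destruct (IHts Hv) as [w [Hw ->]]. exists w; split; auto; apply in_or_app; auto.
Qed.

Lemma ffv_rename (s : Var -> Var) :
  forall (a : formula Fsym Psym) v, In v (ffv (frename s a)) -> exists w, In w (ffv a) /\ v = s w.
Proof.
  induction a; intros v Hv; simpl in *; try contradiction.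
  - apply flat_tfv_rename; auto.
  - apply in_app_or in Hv as [Hv|Hv].
    + destruct (tfv_rename s t1 v Hv) as [w [Hw ->]]. exists w; split; auto; apply in_or_app; auto.
    + destruct (tfv_rename s t2 v Hv) as [w [Hw ->]]. exists w; split; auto; apply in_or_app; auto.
  - auto.
  - apply in_app_or in Hv as [Hv|Hv].
    + destruct (IHa1 v Hv) as [w [Hw ->]]. exists w; split; auto; apply in_or_app; auto.
    + destruct (IHa2 v Hv) as [w [Hw ->]]. exists w; split; auto; apply in_or_app; auto.
  - apply in_app_or in Hv as [Hv|Hv].
    + destruct (IHa1 v Hv) as [w [Hw ->]]. exists w; split; auto; apply in_or_app; auto.
    + destruct (IHa2 v Hv) as [w [Hw ->]]. exists w; split; auto; apply in_or_app; auto.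
  - apply in_app_or in Hv as [Hv|Hv].
    + destruct (IHa1 v Hv) as [w [Hw ->]]. exists w; split; auto; apply in_or_app; auto.
    + destruct (IHa2 v Hv) as [w [Hw ->]]. exists w; split; auto; apply in_or_app; auto.
  - apply in_remove in Hv as [Hv Hne].
    destruct (IHa v Hv) as [w [Hw ->]]. exists w; split; auto.
    apply in_in_remove; auto. intros ->; auto.
  - apply in_remove in Hv as [Hv Hne].
    destruct (IHa v Hv) as [w [Hw ->]]. exists w; split; auto.
    apply in_in_remove; auto. intros ->; auto.
Qed.

Lemma swap_inj : forall x y, swap_prime x = swap_prime y -> x = y.
Proof. intros [x|x] [y|y]; simpl; intros H; inversion H; auto. Qed.

Lemma sat_prime (M : structure Fsym Psym Val) V (inv : formula Fsym Psym) n1 n2 :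
  over_V V inv ->
  (sat M (pair_assign n1 n2) (prime_formula inv) <-> sat M n2 inv).
Proof.
  intros Hov. unfold prime_formula. rewrite sat_rename by apply swap_inj.
  apply sat_coinc. intros v Hv. destruct (Hov v Hv) as [x [_ ->]]. reflexivity.
Qed.

End Aux.

Theorem lemma4 (Fsym Psym Val : Type) (T : structure Fsym Psym Val -> Prop)
  (V : list nat) (base stay step conc inv : formula Fsym Psym) :
  is_GAL T V base stay step conc ->
  over_V V inv ->
  is_GAL T V (fand base inv) (fand stay (prime_formula inv))
             (fand step (prime_formula inv)) (fand conc inv).
Proof.
  intros [Hb [Hc [Hst [Hsp [HI HII]]]]] Hinv.
  assert (HVV : over_VV' V (prime_formula inv)).
  { intros v Hv. destruct (ffv_rename _ _ swap_prime inv v Hv) as [w [Hw ->]].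
    destruct (Hinv w Hw) as [x [Hx ->]]. exists x; simpl; auto. }
  unfold is_GAL. split; [|split; [|split; [|split; [|split]]]].
  - intros v Hv; simpl in Hv; apply in_app_or in Hv as [Hv|Hv]; auto.
  - intros v Hv; simpl in Hv; apply in_app_or in Hv as [Hv|Hv]; auto.
  - intros v Hv; simpl in Hv; apply in_app_or in Hv as [Hv|Hv]; auto.
  - intros v Hv; simpl in Hv; apply in_app_or in Hv as [Hv|Hv]; auto.
  - intros alpha H0 Htr Hprog.
    destruct (HI alpha) as [k Hk].
    + intros M HM; apply (H0 M HM).
    + intros i M HM; destruct (Htr i M HM) as [[? ?]|[? ?]]; simpl; auto.
    + intros i; destruct (Hprog i) as [j [Hij Hj]]; exists j; split; auto.
      intros M HM; apply (Hj M HM).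
    + exists k. intros M HM; split; [apply Hk; auto|].
      destruct k as [|j]; [apply (H0 M HM)|].
      destruct (Htr j M HM) as [[_ H]|[_ H]]; eapply sat_prime; eauto.
  - intros nu nu' H0 Htr M HM. split.
    + apply (HII nu nu').
      * intros M' HM'; apply (H0 M' HM').
      * intros M' HM'; destruct (Htr M' HM') as [[? ?]|[? ?]]; simpl; auto.
      * auto.
    + destruct (Htr M HM) as [[_ H]|[_ H]]; eapply sat_prime; eauto.
Qed.
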